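(* Let $p\ge1$, $X=\{0,1,\dots,p\}$, and for $i\in\{1,\dots,p\}$ let $e_i$ be the transformation of $X^\ast$ defined recursively by $e_i(0w)=i\,e_i(w)$, $e_i(iw)=0w$, $e_i(jw)=jw$ for $j\notin\{0,i\}$. For $n\ge1$ let $A_n=\sum_{i=1}^p\bigl(M^{(n)}_i+(M^{(n)}_i)^{-1}\bigr)$ with $M^{(n)}_i$ the permutation matrix of $e_i$ on $X^n$, let $P_n(\lambda)=\det(\lambda I-A_n)$, $f_p(\lambda)=\lambda^2-2(p-1)\lambda-2p$, and $f_p^{\circ i}$ its $i$-fold iterate. Then for each $n\ge1$ $$P_n(\lambda)=(\lambda-2p)\prod_{i=0}^{n-1}\bigl(f_p^{\circ i}(\lambda)+2\bigr)\prod_{i=0}^{n-1}\bigl(f_p^{\circ i}(\lambda)-2(p-1)\bigr)^{(p-1)(p+1)^{n-i-1}}.$$ In particular the spectrum of $A_n$ (as a multiset) is the union of $\{2p\}$, the sets $f_p^{-i}(-2)$ for $i=0,\dots,n-1$, and the sets $f_p^{-i}(2(p-1))$ for $i=0,\dots,n-1$, each element of the latter counted with multiplicity $(p-1)(p+1)^{n-i-1}$.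
   Context: $f_p^{-i}(x)$ denotes the multiset of roots of $f_p^{\circ i}(\lambda)-x$. $A_n$ is the adjacency matrix of the $n$-th Schreier graph of the star automaton group $\mathcal G_{S_p}=\langle e_1,\dots,e_p\rangle$. *)

(* Defs.v *)
From HB Require Import structures.
From mathcomp Require Import all_boot all_order all_algebra.
Set Implicit Arguments. Unset Strict Implicit. Unset Printing Implicit Defensive.
Import Order.TTheory GRing.Theory Num.Theory.
Local Open Scope ring_scope.

Fixpoint star_gen (p : nat) (i : 'I_p.+1) (w : seq 'I_p.+1) : seq 'I_p.+1 :=
  match w with
  | [::] => [::]
  | x :: w' =>
      if x == ord0 then i :: star_gen i w'
      else if x == i then ord0 :: w'
      else x :: w'
  end.

Definition level (p n : nat) := {: n.-tuple 'I_p.+1}.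

Definition perm_mx_e (p n : nat) (i : 'I_p.+1) : 'M[int]_(#|level p n|) :=
  \matrix_(a, b)
    ((star_gen i (val (enum_val a : n.-tuple 'I_p.+1))
       == val (enum_val b : n.-tuple 'I_p.+1)) : nat)%:R.

Definition adjA (p n : nat) : 'M[int]_(#|level p n|) :=
  \sum_(i < p.+1 | i != ord0) (perm_mx_e n i + invmx (perm_mx_e n i)).

Definition fp (p : nat) : {poly int} :=
  'X^2 - ((2 * (p - 1))%N)%:R *: 'X - ((2 * p)%N)%:R%:P.

Definition fp_iter (p i : nat) : {poly int} := iter i (fun q => fp p \Po q) 'X.

(* Main.v *)
Require Import Defs.
From HB Require Import structures.
From mathcomp Require Import all_boot all_order all_algebra.
From mathcomp Require Import fingroup perm ring zify.
Import Order.TTheory GRing.Theory Num.Theory.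
Local Open Scope ring_scope.
Set Implicit Arguments. Unset Strict Implicit. Unset Printing Implicit Defensive.

Section Gen.
Variable R : comNzRingType.

Lemma det_reindex_ord m (M : 'M[R]_m) (h : 'I_m -> 'I_m) : injective h ->
  \det (\matrix_(i, j) M (h i) (h j)) = \det M.
Proof.
move=> hi; pose s := perm hi.
have -> : \matrix_(i, j) M (h i) (h j) = row_perm s (col_perm s M).
  by apply/matrixP=> i j; rewrite !mxE !permE.
rewrite row_permE col_permE !det_mulmx mulrCA -det_mulmx -perm_mxM mulgV perm_mx1 det1 mulr1.
by [].
Qed.

Lemma det_reindex_ord2 m1 m2 (M : 'M[R]_m2) (h : 'I_m1 -> 'I_m2) : m1 = m2 -> injective h ->
  \det (\matrix_(i, j) M (h i) (h j)) = \det M.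
Proof. by move=> e; subst m2; apply: det_reindex_ord. Qed.

Definition matR (I J : finType) (G : I -> J -> R) : 'M[R]_(#|I|, #|J|) :=
  \matrix_(i, j) G (enum_val i) (enum_val j).
Definition detF (T : finType) (F : T -> T -> R) := \det (matR F).

Lemma detF_bij_ord (T : finType) m (h : 'I_m -> T) F : bijective h ->
  \det (\matrix_(i, j) F (h i) (h j)) = detF F.
Proof.
move=> hb.
have hm : m = #|T| by rewrite -(bij_eq_card hb) card_ord.
rewrite /detF -(@det_reindex_ord2 m _ (matR F) (fun i => enum_rank (h i))) //.
  by congr (\det _); apply/matrixP=> i j; rewrite !mxE !enum_rankK.
by move=> i j /enum_rank_inj; exact: (bij_inj hb).
Qed.

Lemma detF_bij (T T' : finType) (phi : T' -> T) F : bijective phi ->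
  detF (fun x y => F (phi x) (phi y)) = detF F.
Proof.
move=> [g g1 g2].
rewrite -(@detF_bij_ord T _ (fun i : 'I_#|T'| => phi (enum_val i)) F).
  by congr (\det _); apply/matrixP=> i j; rewrite !mxE.
exists (fun x => enum_rank (g x)) => i; first by rewrite g1 enum_valK.
by rewrite enum_rankK g2.
Qed.

Lemma detF_sum (I J : finType) (F : I + J -> I + J -> R) :
  detF F = \det (block_mx (matR (fun x y => F (inl x) (inl y)))
                           (matR (fun x y => F (inl x) (inr y)))
                           (matR (fun x y => F (inr x) (inl y)))
                           (matR (fun x y => F (inr x) (inr y)))).
Proof.
pose h (k : 'I_(#|I| + #|J|)) : I + J :=
  match split k with inl a => inl (enum_val a) | inr b => inr (enum_val b) end.
have hb : bijective h.
  exists (fun u => unsplit (match u with inl x => inl (enum_rank x) | inr y => inr (enum_rank y) end)).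
    move=> k; rewrite /h -[k]splitK; case: (split k) => a; rewrite unsplitK enum_valK //.
  by move=> [x|y]; rewrite /h unsplitK enum_rankK.
rewrite -(detF_bij_ord F hb); congr (\det _).
apply/matrixP=> i j; rewrite -(splitK i) -(splitK j).
case: (split i) => a; case: (split j) => b; rewrite /= ?block_mxEul ?block_mxEur ?block_mxEdl ?block_mxEdr !mxE /h;
  by rewrite -?/(unsplit (inl _)) -?/(unsplit (inr _)) !unsplitK.
Qed.

Lemma schur (m k : nat) (a : R) (D : 'M[R]_m) (B : 'M[R]_(m,k)) (C : 'M[R]_(k,m)) :
  a ^+ m * \det (block_mx D B C (a%:M)) = a ^+ k * \det (a *: D - B *m C).
Proof.
have := congr1 determinant (mulmx_block (a%:M) (-B) 0 1%:M D B C a%:M).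
rewrite !mul_scalar_mx !mul0mx ?mul1mx !add0r mul_mx_scalar mulNmx.
rewrite !scale1r scalerN subrr det_mulmx det_ublock det_lblock !det_scalar ?det1 ?expr1n ?mulr1 => ->.
by rewrite mulrC.
Qed.

End Gen.

Section Star.
Variable p : nat.
Local Notation X := ('I_p.+1).

Lemma size_star_gen (i : X) w : size (star_gen i w) = size w.
Proof. by elim: w => [|x w IH] //=; case: ifP => _ /=; [rewrite IH | case: ifP]. Qed.

Lemma eg_proof n (i : X) (u : n.-tuple X) : size (star_gen i u) == n.
Proof. by rewrite size_star_gen size_tuple. Qed.
Definition eg n (i : X) (u : n.-tuple X) : n.-tuple X := Tuple (eg_proof i u).

Fixpoint star_inv (i : X) (w : seq X) : seq X :=
  match w with
  | [::] => [::]
  | x :: w' => if x == i then ord0 :: star_inv i w'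
               else if x == ord0 then i :: w' else x :: w'
  end.

Lemma star_genK (i : X) : i != ord0 -> cancel (star_gen i) (star_inv i).
Proof.
move=> i0; elim=> [|x w IH] //=.
case: (eqVneq x ord0) => [->|x0] /=; first by rewrite eqxx IH.
case: (eqVneq x i) => [->|xi] /=; first by rewrite eq_sym (negbTE i0).
by rewrite (negbTE xi) (negbTE x0).
Qed.

Lemma eg_inj n (i : X) : i != ord0 -> injective (@eg n i).
Proof. by move=> i0 u v /(congr1 val) /= /(can_inj (star_genK i0)) /val_inj. Qed.

Definition anF n (u v : n.-tuple X) : int :=
  \sum_(i < p.+1 | i != ord0) (((eg i u == v) : nat)%:R + ((eg i v == u) : nat)%:R).

Lemma invmx_perm_e n (i : X) : i != ord0 -> invmx (perm_mx_e n i) = (perm_mx_e n i)^T.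
Proof.
move=> i0.
have hinj : injective (fun a : 'I_#|level p n| => enum_rank (eg i (enum_val a))).
  by move=> a b /enum_rank_inj /(eg_inj i0) /enum_val_inj.
pose s := perm hinj.
have -> : perm_mx_e n i = perm_mx s.
  apply/matrixP => a b; rewrite /perm_mx_e !mxE permE.
  by rewrite -(inj_eq enum_val_inj) enum_rankK.
have AB : (perm_mx s : 'M[int]_ _) *m (perm_mx s)^T = 1%:M.
  by rewrite tr_perm_mx -perm_mxM mulgV perm_mx1.
have [uA _] := mulmx1_unit AB.
by rewrite -[invmx _]mulmx1 -AB mulmxA mulVmx // mul1mx.
Qed.

Lemma adjA_mat n : adjA p n = matR (@anF n).
Proof.
apply/matrixP => a b; rewrite /adjA summxE !mxE /anF.
apply: eq_bigr => i i0; rewrite invmx_perm_e // !mxE.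
done.
Qed.

End Star.

Section Rec.
Variable p : nat.
Local Notation X := ('I_p.+1).

Definition phi n (u : n.-tuple X + ('I_p * n.-tuple X)) : n.+1.-tuple X :=
  match u with
  | inl w => [tuple of ord0 :: w]
  | inr (i, w) => [tuple of lift ord0 i :: w]
  end.

Definition psi n (t : n.+1.-tuple X) : n.-tuple X + ('I_p * n.-tuple X) :=
  match unlift ord0 (thead t) with
  | None => inl [tuple of behead t]
  | Some i => inr (i, [tuple of behead t])
  end.

Lemma phi_bij n : bijective (@phi n).
Proof.
exists (@psi n).
  case=> [w|[i w]]; rewrite /psi /phi theadE ?unlift_none ?liftK;
  by congr (_ _); try congr (_, _); apply: val_inj.
move=> t; rewrite {2}(tuple_eta t) /psi /phi; case: unliftP => [i|] -> /=; by apply: val_inj.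
Qed.

Lemma sum_nz (R : nmodType) (F : X -> R) :
  \sum_(k < p.+1 | k != ord0) F k = \sum_(k < p) F (lift ord0 k).
Proof.
rewrite big_mkcond big_ord_recl eqxx /= add0r; apply: eq_bigr => k _.
by [].
Qed.


Lemma eg_eq n k (u v : n.-tuple X) : (eg k u == v) = (star_gen k u == v :> seq X).
Proof. by []. Qed.

Lemma lift0_neq (i : 'I_p) : (lift ord0 i == ord0 :> X) = false.
Proof. by rewrite eq_sym (negbTE (neq_lift _ _)). Qed.

Lemma lift0_eq (i j : 'I_p) : (lift ord0 i == lift ord0 j :> X) = (i == j).
Proof. exact: (inj_eq (@lift_inj _ ord0)). Qed.

Lemma lift0_neq' (i : 'I_p) : (ord0 == lift ord0 i :> X) = false.
Proof. exact: (negbTE (neq_lift _ _)). Qed.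

Definition bF n (w : n.-tuple X) (j : 'I_p * n.-tuple X) : int :=
  ((eg (lift ord0 j.1) w == j.2) : nat)%:R + ((w == j.2) : nat)%:R.

Lemma anF_sym n (u v : n.-tuple X) : anF u v = anF v u.
Proof. by apply: eq_bigr => k _; rewrite addrC. Qed.

Lemma anF00 n (w w' : n.-tuple X) : anF [tuple of ord0 :: w] [tuple of ord0 :: w'] = 0.
Proof.
rewrite /anF big1 // => k k0.
  by rewrite !eg_eq /= !eqseq_cons (negbTE k0) addr0.
Qed.

Lemma anF0i n (w : n.-tuple X) (i : 'I_p) (w' : n.-tuple X) :
  anF [tuple of ord0 :: w] [tuple of lift ord0 i :: w'] = bF w (i, w').
Proof.
rewrite /anF sum_nz (bigD1 i) //= big1 ?addr0.
  by rewrite !eg_eq /= eqxx !eqseq_cons eqxx /bF /= eg_eq (eq_sym (tval w')).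
move=> k ki; rewrite !eg_eq /= !eqseq_cons !lift0_eq (eq_sym i k) (negbTE ki) /=.
by rewrite addr0.
Qed.

Lemma anFii n (i : 'I_p) (w : n.-tuple X) (j : 'I_p) (w' : n.-tuple X) :
  anF [tuple of lift ord0 i :: w] [tuple of lift ord0 j :: w'] =
  ((((i == j) && (w == w')) : bool) : nat)%:R * ((2 * (p - 1))%N)%:R.
Proof.
rewrite /anF sum_nz.
have E : forall k : 'I_p, ((eg (lift ord0 k) [tuple of lift ord0 i :: w] == [tuple of lift ord0 j :: w']) : nat)%:R
   + ((eg (lift ord0 k) [tuple of lift ord0 j :: w'] == [tuple of lift ord0 i :: w]) : nat)%:R
   = (((i == j) && (w == w') : bool) : nat)%:R * (((k != i) : nat)%:R *+ 2) :> int.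
  move=> k; rewrite !eg_eq /= !lift0_eq.
  case: (eqVneq i k) => [->|ik];
  case: (eqVneq j k) => [->|jk] /=.
  - by rewrite mul0rn mulr0 addr0.
  - by rewrite eqseq_cons lift0_eq (negbTE jk) mul0r addr0.
  - by rewrite eqseq_cons lift0_eq (negbTE ik) /= mul0r addr0.
  rewrite !eqseq_cons !lift0_eq (eq_sym j i) (eq_sym (tval w')).
  by case: (_ && _); rewrite /= ?mul1r ?mul0r ?addr0.
rewrite (eq_bigr _ (fun k _ => E k)) -mulr_sumr; congr (_ * _).
rewrite (bigD1 i) //= eqxx add0r.
rewrite (eq_bigr (fun _ => 2%:R)); last by move=> k ->.
by rewrite sumr_const cardC1 card_ord natrM mulr_natr subn1.
Qed.

End Rec.

Lemma matR_scalar (R : comNzRingType) (T : finType) (a : R) :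
  matR (fun x y : T => a *+ (x == y)) = a%:M.
Proof. by apply/matrixP => i j; rewrite !mxE (inj_eq enum_val_inj). Qed.

Lemma sum_enum (R : nmodType) (T : finType) (G : T -> R) :
  \sum_(i < #|T|) G (enum_val i) = \sum_x G x.
Proof. by rewrite -(big_enum_val G). Qed.

Lemma sum_delta (T : finType) (x y : T) :
  \sum_v (((x == v) : nat)%:R * ((y == v) : nat)%:R : int) = ((x == y) : nat)%:R.
Proof.
rewrite (bigD1 x) //= eqxx mul1r big1 ?addr0 ?(eq_sym y) // => v vx.
by rewrite eq_sym (negbTE vx) mul0r.
Qed.

Section Main.
Variable p : nat.
Local Notation X := ('I_p.+1).

Lemma cons_eq n (x y : X) (u v : n.-tuple X) :
  ([tuple of x :: u] == [tuple of y :: v]) = (x == y) && (u == v).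
Proof. by rewrite -val_eqE /= eqseq_cons. Qed.

Definition charF n (u v : n.-tuple X) : {poly int} := 'X *+ (u == v) - (anF u v)%:P.
Definition Q n := detF (@charF n).
Definition cP : {poly int} := ((2 * (p - 1))%N)%:R%:P.

Lemma charpoly_Q n : char_poly (adjA p n) = Q n.
Proof.
rewrite /char_poly /Q /detF adjA_mat; congr (\det _).
by apply/matrixP => a b; rewrite !mxE /charF (inj_eq enum_val_inj).
Qed.

Lemma BC_sum n (w w' : n.-tuple X) :
  \sum_(j : 'I_p * n.-tuple X) (- (bF w j)%:P) * (- (bF w' j)%:P) =
  (((2 * p)%N%:R *+ (w == w') + anF w w')%:P : {poly int}).
Proof.
under eq_bigr do rewrite mulrNN -polyCM.
rewrite -rmorph_sum; congr (_%:P).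
rewrite -(pair_big predT predT (fun i v => bF w (i, v) * bF w' (i, v))) /=.
have E : forall i : 'I_p, \sum_v bF w (i, v) * bF w' (i, v) =
    (((eg (lift ord0 i) w == w') : nat)%:R + ((eg (lift ord0 i) w' == w) : nat)%:R)
    + ((w == w') : nat)%:R *+ 2.
  move=> i; rewrite /bF /=.
  under eq_bigr do rewrite mulrDl !mulrDr.
  rewrite !big_split /= !sum_delta (inj_eq (eg_inj _)); last by rewrite lift0_neq.
  rewrite (eq_sym w (eg _ w')) mulr2n. ring.
rewrite (eq_bigr _ (fun i _ => E i)) big_split /= sumr_const card_ord /anF sum_nz addrC.
congr (_ + _).
by case: (w == w'); rewrite /= ?mul0rn // -mulrnA.
Qed.

Lemma Q_rec n : ('X - cP) ^+ #|{: n.-tuple X}| * Q n.+1 =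
  ('X - cP) ^+ #|{: 'I_p * n.-tuple X}| * (Q n \Po fp p).
Proof.
rewrite /Q -(detF_bij (@charF n.+1) (@phi_bij p n)) detF_sum.
have UL : matR (fun x y => charF (phi (inl x)) (phi (inl y))) =
          matR (fun x y : n.-tuple X => 'X *+ (x == y)).
  by apply/matrixP => a b; rewrite !mxE /charF /= anF00 subr0 cons_eq eqxx.
have DR : matR (fun x y => charF (@phi p n (inr x)) (phi (inr y))) = ('X - cP)%:M.
  rewrite -matR_scalar; apply/matrixP => a b; rewrite !mxE.
  case: (enum_val a) => i w; case: (enum_val b) => j w'.
  rewrite /charF /= anFii cons_eq lift0_eq xpair_eqE.
  by case: (_ && _); rewrite /= ?mul1r ?mul0r ?subr0.
have UR : matR (fun x y => charF (phi (inl x)) (@phi p n (inr y))) =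
          matR (fun w j => - (bF w j)%:P).
  apply/matrixP => a b; rewrite !mxE; case: (enum_val b) => j w'.
  by rewrite /charF /= anF0i mulr0n sub0r.
have DL : matR (fun x y => charF (@phi p n (inr x)) (phi (inl y))) =
          matR (fun j w => - (bF w j)%:P).
  apply/matrixP => a b; rewrite !mxE; case: (enum_val a) => j w'.
  by rewrite /charF /= anF_sym anF0i mulr0n sub0r.
rewrite UL UR DL DR schur; congr (_ * _).
rewrite -det_map_mx; congr (\det _); apply/matrixP => a b; rewrite !mxE.
under eq_bigr do rewrite !mxE.
rewrite (sum_enum (fun j => (- (bF (enum_val a) j)%:P) * (- (bF (enum_val b) j)%:P))).
rewrite BC_sum /charF rmorphB /= rmorphMn /= comp_polyX comp_polyC.
case: (enum_val a == enum_val b); rewrite /= ?mulr0n ?mulr1n ?mulr0 ?add0r //.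
rewrite polyCD /fp /cP -mul_polyC; ring.
Qed.

End Main.

Section Fin.
Variable p : nat.
Hypothesis hp : (1 <= p)%N.
Local Notation X := ('I_p.+1).

Lemma Q0 : Q p 0 = 'X - ((2 * p)%N)%:R%:P.
Proof.
rewrite /Q -(@detF_bij_ord _ _ 1 (fun _ => [tuple])); last first.
  exists (fun _ => ord0); first by move=> i; rewrite (ord1 i).
  by move=> t; rewrite (tuple0 t).
rewrite det_mx11 mxE /charF /anF eqxx mulr1n sum_nz.
rewrite (eq_bigr (fun _ => 2%:R)) // sumr_const card_ord.
by rewrite natrM mulr_natr.
Qed.

Lemma Q_rec' n : Q p n.+1 = ('X - cP p) ^+ ((p - 1) * (p + 1) ^ n) * (Q p n \Po fp p).
Proof.
have := Q_rec p n; rewrite card_prod !card_tuple !card_ord.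
have -> : (p * p.+1 ^ n = p.+1 ^ n + (p - 1) * (p + 1) ^ n)%N.
  by rewrite addn1; move: (p.+1 ^ n)%N => m; nia.
rewrite exprD -mulrA => /mulfI -> //.
by rewrite expf_neq0 // polyXsubC_eq0.
Qed.


Lemma fp_iterS i : fp_iter p i \Po fp p = fp_iter p i.+1.
Proof.
elim: i => [|i IH]; first by rewrite /fp_iter /= comp_polyX comp_polyXr.
move: IH; rewrite /fp_iter !iterS => IH.
by rewrite -comp_polyA IH.
Qed.

Lemma fp_sub : ('X - ((2 * p)%N)%:R%:P) \Po fp p =
  ('X - ((2 * p)%N)%:R%:P) * (fp_iter p 0 + 2%:P).
Proof.
rewrite comp_polyB comp_polyX comp_polyC /fp /fp_iter /= -mul_polyC.
have -> : ((2 * (p - 1))%N)%:R%:P = ((2 * p)%N)%:R%:P - 2%:P :> {poly int}.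
  by rewrite -polyCB mulnBr muln1 natrB //; lia.
ring.
Qed.

Lemma closed n : Q p n =
    ('X - ((2 * p)%N)%:R%:P)
    * \prod_(i < n) (fp_iter p i + 2%:P)
    * \prod_(i < n) (fp_iter p i - ((2 * (p - 1))%N)%:R%:P)
                      ^+ ((p - 1) * (p + 1) ^ (n - i - 1))%N.
Proof.
elim: n => [|n IH]; first by rewrite Q0 !big_ord0 !mulr1.
rewrite Q_rec' IH !comp_polyM !rmorph_prod /= fp_sub.
under eq_bigr do rewrite rmorphD /= comp_polyC fp_iterS.
under [X in _ * (_ * _ * X) = _]eq_bigr do rewrite rmorphXn rmorphB /= comp_polyC fp_iterS.
rewrite !big_ord_recl /= subn0 subn1 /=.
under [X in _ = _ * (_ * X) * _]eq_bigr => i _ do rewrite add0n.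
under [X in _ = _ * (_ * X)]eq_bigr => i _ do rewrite add0n /bump /= add1n subSS.
rewrite /cP !subn1 /=.
move: (\prod_(i < n) _) => P1; move: (\prod_(i < n) _) => P2.
move: (p.-1 * (p + 1) ^ n)%N => E.
ring.
Qed.
End Fin.

Unset Implicit Arguments.

Theorem theorem3p9 (p n : nat) (hp : (1 <= p)%N) (hn : (1 <= n)%N) :
  char_poly (adjA p n) =
    ('X - ((2 * p)%N)%:R%:P)
    * \prod_(i < n) (fp_iter p i + 2%:P)
    * \prod_(i < n) (fp_iter p i - ((2 * (p - 1))%N)%:R%:P)
                      ^+ ((p - 1) * (p + 1) ^ (n - i - 1))%N.
Proof. by rewrite charpoly_Q (closed hp). Qed.
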